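(* Let $W\subseteq\mathbb{H}$, let $x\in\mathbb{P}\mathbb{R}_+^d$ be a totally irrational direction, and let $M\in GL_{d+1}(\mathbb{Z})\cap M_{d+1}(\mathbb{N})$. If $W$ has non-empty interior for the topology $\mathcal{T}_x$, then $MW$ has non-empty interior for the topology $\mathcal{T}_{Mx}$.
   Context: $h(y)=\sum_iy_i$ on $\mathbb{R}^{d+1}$, $P=\{h=0\}$, $\mathbb{H}=\{z\in\mathbb{Z}^{d+1}:h(z)\ge0\}$. $\mathbb{P}\mathbb{R}_+^d$ is the set of positive directions, $v(x)$ the $\ell^1$-normalized representative, $Mx=[Mv(x)]$, $\pi_x(z)=z-h(z)v(x)$; $x$ is totally irrational if the coordinates of $v(x)$ are $\mathbb{Q}$-linearly independent. $\mathcal{T}_x$ is the topology on $\mathbb{H}$ whose open sets are $\pi_x^{-1}(U)\cap\mathbb{H}$ with $U\subseteq P$ open. *)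

(* Defs.v *)
From HB Require Import structures.
From mathcomp Require Import all_boot all_order all_algebra.
From mathcomp Require Import all_classical all_reals all_analysis.
Set Implicit Arguments. Unset Strict Implicit. Unset Printing Implicit Defensive.
Import numFieldTopology.Exports.
Import Order.TTheory GRing.Theory Num.Theory.
Local Open Scope classical_set_scope.
Local Open Scope ring_scope.

Definition hsum (K : pzRingType) (n : nat) (y : 'cV[K]_n) : K := \sum_i y i 0.

Definition hypP (R : realType) (n : nat) : set 'cV[R]_n := [set y | hsum y = 0].

Definition halfH (n : nat) : set 'cV[int]_n := [set z | 0 <= hsum z].

Definition zR (R : realType) (n : nat) (z : 'cV[int]_n) : 'cV[R]_n :=
  map_mx (fun k : int => k%:~R) z.

(* a positive direction is represented by a vector with positive entries *)
Definition positive_vec (R : realType) (n : nat) (x : 'cV[R]_n) : Prop :=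
  forall i, 0 < x i 0.

Definition vdir (R : realType) (n : nat) (x : 'cV[R]_n) : 'cV[R]_n :=
  (hsum x)^-1 *: x.

Definition totally_irrational (R : realType) (n : nat) (x : 'cV[R]_n) : Prop :=
  forall q : 'I_n -> rat, \sum_i ratr (q i) * vdir x i 0 = 0 -> forall i, q i = 0.

Definition pix (R : realType) (n : nat) (x y : 'cV[R]_n) : 'cV[R]_n :=
  y - hsum y *: vdir x.

Definition openP (R : realType) (n : nat) (U : set 'cV[R]_n) : Prop :=
  exists O : set 'cV[R]_n, open O /\ U = O `&` @hypP R n.

Definition Tx_open (R : realType) (n : nat) (x : 'cV[R]_n) (V : set 'cV[int]_n)
  : Prop :=
  exists U : set 'cV[R]_n, openP U /\
    V = [set z | U (pix x (@zR R n z))] `&` @halfH n.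

Definition Tx_nonempty_interior (R : realType) (n : nat) (x : 'cV[R]_n)
  (W : set 'cV[int]_n) : Prop :=
  exists V, Tx_open x V /\ V !=set0 /\ V `<=` W.

(* Main.v *)
Require Import Defs.
From HB Require Import structures.
From mathcomp Require Import all_boot all_order all_algebra.
From mathcomp Require Import all_classical all_reals all_analysis.
From mathcomp Require Import ring lra zify.
Import Order.TTheory GRing.Theory Num.Theory.
Import numFieldTopology.Exports.
Local Open Scope classical_set_scope.
Local Open Scope ring_scope.



Section Lip.
Variable R : realType.

Lemma lip_cont (U V : normedModType R) (f : U -> V) (K : R) :
  (forall a b, `|f a - f b| <= K * `|a - b|) -> continuous f.
Proof.
move=> Hf x; apply/cvgrPdist_lt => e e0.
have K1 : 0 < `|K| + 1 by rewrite ltr_pwDr.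
have H : \forall y \near x, `|x - y| < e / (`|K| + 1).
  exact: (@cvgr_dist_lt _ _ _ (nbhs x) _ id x (@cvg_id _ (nbhs x)) _ (divr_gt0 e0 K1)).
 near=> y; have hy := near H y.
apply: (le_lt_trans (Hf _ _)).
have n0 : 0 <= `|x - y| by [].
have h1 : K * `|x - y| <= (`|K| + 1) * `|x - y|.
  by apply: ler_wpM2r => //; apply: le_trans (ler_norm K) _; rewrite lerDl.
apply: (le_lt_trans h1); rewrite -ltr_pdivlMl // mulrC; move: hy.
rewrite distrC /=; move=> hy; exact: hy.

Unshelve. all: by end_near.
Qed.

Lemma entry_le_norm m n (q : 'M[R]_(m, n)) i j : `|q i j| <= `|q|.
Proof.
by rewrite [leRHS]/Num.Def.normr /= mx_normrE; apply/bigmax_geP; right => /=; exists (i, j).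
Qed.

Lemma norm_le_entries m n (q : 'M[R]_(m, n)) K : 0 <= K ->
  (forall i j, `|q i j| <= K) -> `|q| <= K.
Proof.
move=> K0 H; rewrite [leLHS]/Num.Def.normr /= mx_normrE; apply/bigmax_leP; split => //.
Qed.


Lemma mulmx_lip m n p (A : 'M[R]_(m, n)) (a b : 'M[R]_(n, p)) :
  `|A *m a - A *m b| <= (n%:R * `|A|) * `|a - b|.
Proof.
rewrite -mulmxBr; apply: norm_le_entries.
  by rewrite mulr_ge0 // mulr_ge0.
move=> i j; rewrite mxE.
apply: (le_trans (ler_norm_sum _ _ _)).
have -> : n%:R * `|A| * `|a - b| = \sum_(k < n) (`|A| * `|a - b|).
  by rewrite sumr_const card_ord -mulrA mulr_natl.
apply: ler_sum => k _; rewrite normrM.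
by apply: ler_pM => //; apply: entry_le_norm.
Qed.

Lemma mulmx_cont m n p (A : 'M[R]_(m, n)) :
  continuous (fun q : 'M[R]_(n, p) => A *m q).
Proof. by apply: (@lip_cont _ _ _ (n%:R * `|A|)) => a b; apply: mulmx_lip. Qed.

Lemma mulmx_coord_cont m n p (A : 'M[R]_(m, n)) i j :
  continuous (fun q : 'M[R]_(n, p) => (A *m q) i j).
Proof.
move=> q.
have H := (@continuous_comp _ _ _ (fun q : 'M[R]_(n, p) => A *m q) (fun M : 'M[R]_(m, p) => M i j) q (@mulmx_cont m n p A q) (@coord_continuous _ _ _ i j _)).
exact: H.
Qed.

End Lip.

Section Dir.
Variable R : realType.

Lemma same_trunc (a b : R) : 0 <= a -> 0 <= b -> Num.truncn a = Num.truncn b ->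
  `|a - b| < 1.
Proof.
move=> a0 b0 e.
have /andP[h1 h2] := truncn_itv a0.
have /andP[h3 h4] := truncn_itv b0.
rewrite e in h1 h2.
move: h1 h2 h3 h4; set t := (Num.truncn b)%:R; rewrite -natr1 -/t => h1 h2 h3 h4.
rewrite ltr_norml; apply/andP; split; lra.
Qed.

Definition frac (y : R) := y - (Num.floor y)%:~R.

Lemma frac_itv y : 0 <= frac y < 1.
Proof.
have /andP[h1 h2] := Num.Theory.floor_itv y.
rewrite /frac; rewrite intrD in h2; apply/andP; split; lra.
Qed.

Lemma dirichlet n (v : 'cV[R]_n) (Q : nat) :
  exists m : nat, exists u : 'cV[int]_n, (0 < m)%N /\
    forall i, `|(u i 0)%:~R - m%:R * v i 0| < (Q.+1)%:R^-1.
Proof.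
pose t (k : nat) (i : 'I_n) := Num.truncn ((Q.+1)%:R * frac (k%:R * v i 0)).
have tlt k i : (t k i < Q.+1)%N.
  have /andP[f0 f1] := frac_itv (k%:R * v i 0).
  rewrite /t truncn_lt_nat; last by rewrite mulr_ge0.
  rewrite -[ltRHS]mulr1 ltr_pM2l //.
pose f (k : 'I_(Q.+1 ^ n).+1) : {ffun 'I_n -> 'I_Q.+1} := [ffun i => inord (t k i)].
have : ~~ injectiveb f.
  apply/negP => /injectiveP inj; have := leq_card f inj.
  by rewrite card_ffun !card_ord ltnn.
case/injectivePn => k1 [k2 neq feq].
wlog lt12 : k1 k2 neq feq / (k1 < k2)%N.
  move=> W; case: (ltngtP k1 k2) => h; first exact: (W k1 k2).
    by apply: (W k2 k1) => //; rewrite eq_sym.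
  by move/val_inj: h neq => ->; rewrite eqxx.
have teq i : t k1 i = t k2 i.
  have := congr1 (fun g : {ffun 'I_n -> 'I_Q.+1} => nat_of_ord (g i)) feq; rewrite /= !ffunE /=.
  by rewrite !inordK.
exists (k2 - k1)%N, (\col_i (Num.floor (k2%:R * v i 0) - Num.floor (k1%:R * v i 0))).
split; first by rewrite subn_gt0.
move=> i; rewrite mxE.
have /andP[a0 a1] := frac_itv (k1%:R * v i 0).
have /andP[b0 b1] := frac_itv (k2%:R * v i 0).
have := @same_trunc _ _ (mulr_ge0 (ler0n _ Q.+1) a0) (mulr_ge0 (ler0n _ Q.+1) b0) (teq i).
rewrite -mulrBr normrM ger0_norm // => H.
have -> : (Num.floor (k2%:R * v i 0) - Num.floor (k1%:R * v i 0))%:~R - (k2 - k1)%:R * v i 0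
   = frac (k1%:R * v i 0) - frac (k2%:R * v i 0).
  rewrite /frac natrB ?(ltnW lt12) // intrB; ring.
by rewrite -[X in _ < X]mul1r ltr_pdivlMr // mulrC.

Qed.

End Dir.

Section Alg.
Variable R : realType.
Variable n : nat.
Implicit Types a b y x : 'cV[R]_n.

Lemma hsumD a b : hsum (a + b) = hsum a + hsum b.
Proof. by rewrite /hsum -big_split; apply: eq_bigr => i _; rewrite mxE. Qed.
Lemma hsumN a : hsum (- a) = - hsum a.
Proof. by rewrite /hsum -sumrN; apply: eq_bigr => i _; rewrite mxE. Qed.
Lemma hsumB a b : hsum (a - b) = hsum a - hsum b.
Proof. by rewrite hsumD hsumN. Qed.
Lemma hsumZ (k : R) a : hsum (k *: a) = k * hsum a.
Proof. by rewrite /hsum mulr_sumr; apply: eq_bigr => i _; rewrite mxE. Qed.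

Lemma hsum_zR (z : 'cV[int]_n) : hsum (zR R z) = (hsum z)%:~R.
Proof. by rewrite /hsum rmorph_sum; apply: eq_bigr => i _; rewrite mxE. Qed.

Lemma zR_mul (M : 'M[int]_n) (z : 'cV[int]_n) :
  zR R (M *m z) = map_mx (fun k : int => k%:~R) M *m zR R z.
Proof. by rewrite /zR map_mxM. Qed.

Lemma zRD (z1 z2 : 'cV[int]_n) : zR R (z1 + z2) = zR R z1 + zR R z2.
Proof. by apply/matrixP => i j; rewrite !mxE rmorphD. Qed.
Lemma zRB (z1 z2 : 'cV[int]_n) : zR R (z1 - z2) = zR R z1 - zR R z2.
Proof. by apply/matrixP => i j; rewrite !mxE rmorphB. Qed.
Lemma zRMn (z : 'cV[int]_n) k : zR R (z *+ k) = zR R z *+ k.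
Proof. by apply/matrixP => i j; rewrite mulmxnE !mxE mulmxnE rmorphMn. Qed.

Lemma hsum_vdir x : hsum x != 0 -> hsum (vdir x) = 1.
Proof. by move=> h; rewrite /vdir hsumZ mulVf. Qed.

Lemma hsum_pix x y : hsum (vdir x) = 1 -> hsum (pix x y) = 0.
Proof. by move=> h; rewrite /pix hsumB hsumZ h mulr1 subrr. Qed.

Lemma pix_dec x y : y = pix x y + hsum y *: vdir x.
Proof. by rewrite /pix subrK. Qed.

Lemma hsum_mx y : hsum y = ((const_mx 1 : 'M[R]_(1, n)) *m y) 0 0.
Proof. by rewrite /hsum mxE; apply: eq_bigr => i _; rewrite mxE mul1r. Qed.

Lemma pix_mx x y : pix x y = (1%:M - vdir x *m (const_mx 1 : 'M[R]_(1, n))) *m y.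
Proof.
rewrite mulmxBl mul1mx -mulmxA /pix; congr (_ - _).
apply/matrixP => i j; rewrite !mxE big_ord1 mxE (ord1 j) hsum_mx mulrC.
by congr (_ * _); rewrite !mxE.
Qed.

Lemma pixB x a b : pix x (a - b) = pix x a - pix x b.
Proof. by rewrite !(pix_mx x) mulmxBr. Qed.

Lemma pixD x a b : pix x (a + b) = pix x a + pix x b.
Proof. by rewrite !(pix_mx x) mulmxDr. Qed.

Lemma pixZ x (k : R) a : pix x (k *: a) = k *: pix x a.
Proof. by rewrite !(pix_mx x) scalemxAr. Qed.

Lemma pix_v x (k : R) : hsum (vdir x) = 1 -> pix x (k *: vdir x) = 0.
Proof. by move=> h; rewrite /pix hsumZ h mulr1 subrr. Qed.

End Alg.

Section Sep.
Variable R : realType.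

Lemma finite_min (T : finType) (f : T -> R) :
  (forall t, 0 < f t) -> exists2 r : R, 0 < r & forall t, r <= f t.
Proof.
move=> Hf.
have : forall s : seq T, exists2 r : R, 0 < r & forall t, t \in s -> r <= f t.
  elim => [|a s [r r0 IH]]; first by exists 1.
  exists (Num.min r (f a)); first by rewrite lt_min r0 Hf.
  move=> t; rewrite inE => /orP [/eqP -> | /IH h].
    by rewrite ge_min lexx orbT.
  by rewrite ge_min h.
move=> /(_ (enum T)) [r r0 H]; exists r => // t; apply: H.
by rewrite mem_enum.
Qed.

Lemma absz_bound (a : int) (N : nat) : (absz a <= N)%N ->
  (absz (a + N%:Z)%R < N.*2.+1)%N /\ ((absz (a + N%:Z))%:Z - N%:Z = a).
Proof. move=> h; split; lia. Qed.

Lemma sep (v0 v1 : R) (N : nat) :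
  (forall a b : int, a%:~R * v1 - b%:~R * v0 = 0 -> a = 0 /\ b = 0) ->
  exists2 r : R, 0 < r & forall a b : int, (absz a <= N)%N -> (absz b <= N)%N ->
    (a != 0) || (b != 0) -> r <= `|a%:~R * v1 - b%:~R * v0|.
Proof.
move=> Hirr.
pose g (t : 'I_(N.*2.+1) * 'I_(N.*2.+1)) :=
  let a := (t.1 : nat)%:Z - N%:Z in let b := (t.2 : nat)%:Z - N%:Z in
  if (a != 0) || (b != 0) then `|a%:~R * v1 - b%:~R * v0| else 1.
have gpos t : 0 < g t.
  rewrite /g /=; case: ifP => // h; rewrite normr_gt0; apply/eqP => /Hirr [h1 h2].
  by move: h; rewrite h1 h2.
have [r r0 Hr] := @finite_min _ g gpos.
exists r => // a b ha hb hab.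
have [a1 a2] := @absz_bound _ _ ha; have [b1 b2] := @absz_bound _ _ hb.
have := Hr (inord (absz (a + N%:Z)), inord (absz (b + N%:Z))).
by rewrite /g /= !inordK // a2 b2 hab.
Qed.

End Sep.




Section Main.
Variable R : realType.

Lemma hsum_gt0 n (y : 'cV[R]_n.+1) : (forall i, 0 < y i 0) -> 0 < hsum y.
Proof.
move=> H; rewrite /hsum big_ord_recl; apply: (lt_le_trans (H ord0)).
by rewrite lerDl sumr_ge0 // => i _; apply: ltW.
Qed.

Lemma hsum_gt0_nz n (y : 'cV[R]_n) : (forall i, 0 <= y i 0) -> y != 0 -> 0 < hsum y.
Proof.
move=> H yn0; rewrite lt_def sumr_ge0 ?andbT //; apply: contra yn0 => /eqP h.
apply/eqP/matrixP => i j; rewrite (ord1 j) mxE.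
by apply: (psumr_eq0P (fun i _ => H i) h).
Qed.

Lemma hsum_norm n (y : 'cV[R]_n) : `|hsum y| <= n%:R * `|y|.
Proof.
rewrite /hsum; apply: (le_trans (ler_norm_sum _ _ _)).
have -> : n%:R * `|y| = \sum_(i < n) `|y|.
  by rewrite sumr_const card_ord mulr_natl.
by apply: ler_sum => i _; apply: entry_le_norm.
Qed.

Lemma open_hsum_gt n m (A : 'M[R]_(m, n)) (a : R) :
  open [set p : 'cV[R]_n | a < hsum (A *m p)].
Proof.
have -> : [set p : 'cV[R]_n | a < hsum (A *m p)] =
  (fun p => ((const_mx 1 : 'M[R]_(1, m)) *m A *m p) 0 0) @^-1` [set t | a < t].
  by apply/funext => p; rewrite /preimage /= hsum_mx mulmxA.
apply: (continuousP _).1; [exact: mulmx_coord_cont | exact: open_gt].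
Qed.

Lemma open_hsum_lt n m (A : 'M[R]_(m, n)) (a : R) :
  open [set p : 'cV[R]_n | hsum (A *m p) < a].
Proof.
have -> : [set p : 'cV[R]_n | hsum (A *m p) < a] =
  (fun p => ((const_mx 1 : 'M[R]_(1, m)) *m A *m p) 0 0) @^-1` [set t | t < a].
  by apply/funext => p; rewrite /preimage /= hsum_mx mulmxA.
apply: (continuousP _).1; [exact: mulmx_coord_cont | exact: open_lt].
Qed.


Lemma hsumMn_int n (u : 'cV[int]_n) k : hsum (u *+ k) = hsum u *+ k.
Proof. by rewrite /hsum -sumrMnl; apply: eq_bigr => i _; rewrite mulmxnE. Qed.

Lemma pixMn n (x a : 'cV[R]_n) k : pix x (a *+ k) = pix x a *+ k.
Proof.
elim: k => [|k IH]; last by rewrite !mulrS pixD IH.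
rewrite !mulr0n /pix /hsum big1 ?scale0r ?subr0 // => i _; by rewrite mxE.
Qed.

Lemma dir2 n (x : 'cV[R]_n) (d : R) (J : nat) : hsum (vdir x) = 1 -> 0 < d ->
  exists u : 'cV[int]_n, (J%:Z <= hsum u) /\ `|pix x (zR R u)| < d.
Proof.
move=> hv d0; set v := vdir x.
set K := J.+1%:R * (1 + n%:R * `|v|).
have K0 : 0 < K by rewrite mulr_gt0 // ltr_pwDl // mulr_ge0.
have := @archi_boundP _ (n%:R + K / d) (addr_ge0 (ler0n _ _) (ltW (divr_gt0 K0 d0))).
set Q := Num.bound _ => hQ.
have [m [u' [m0 Hu']]] := @dirichlet R n v Q.
set e := zR R u' - m%:R *: v.
have ee i : `|e i 0| < Q.+1%:R^-1.
  by have := Hu' i; rewrite /e /v !mxE.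
have ne : `|e| <= Q.+1%:R^-1.
  by apply: norm_le_entries => [|i j]; [rewrite invr_ge0 | rewrite (ord1 j); apply: ltW].
have pe : pix x (zR R u') = pix x e by rewrite /e pixB pix_v // subr0.
have Q1 : n%:R < Q.+1%:R :> R.
  apply: (lt_trans _ (_ : Q%:R < Q.+1%:R)); last by rewrite ltr_nat.
  by apply: le_lt_trans hQ; rewrite lerDl ltW // divr_gt0.
have Qp : 0 < Q.+1%:R :> R by [].
have he : `|hsum e| <= n%:R * Q.+1%:R^-1.
  apply: (le_trans (@hsum_norm n e)); apply: ler_wpM2l => //.
have np : `|pix x e| <= (1 + n%:R * `|v|) * Q.+1%:R^-1.
  rewrite /pix; apply: (le_trans (ler_normB _ _)); rewrite normrZ mulrDl mul1r.
  apply: lerD => //; rewrite mulrAC; apply: ler_wpM2r => //.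
have hu'1 : (1 <= hsum u')%R.
  have hs : hsum (zR R u') = m%:R + hsum e.
    by rewrite /e hsumB hsumZ hv mulr1 addrC subrK.
  have : 0 < hsum (zR R u').
    rewrite hs; have : - (n%:R * Q.+1%:R^-1) <= hsum e.
      by move: he; rewrite ler_norml => /andP[].
    have : n%:R * Q.+1%:R^-1 < 1 :> R by rewrite ltr_pdivrMr // mul1r.
    have : 1 <= m%:R :> R by rewrite ler1n.
    move: (n%:R / Q.+1%:R) (hsum e) (m%:R : R) => a b c h1 h2 h3; lra.
  by rewrite hsum_zR ltr0z.
exists (u' *+ J.+1); split.
  have h : 1 *+ J.+1 <= hsum u' *+ J.+1 by rewrite lerMn2r hu'1 orbT.
  rewrite hsumMn_int; apply: le_trans h; lia.
rewrite zRMn pixMn pe normrMn.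
have h : `|pix x e| *+ J.+1 <= ((1 + n%:R * `|v|) * Q.+1%:R^-1) *+ J.+1.
  by rewrite lerMn2r np orbT.
apply: (le_lt_trans h).
rewrite -mulr_natl mulrA -/K ltr_pdivrMr // mulrC -ltr_pdivrMl //.
rewrite mulrC ltr_pdivrMr // mulrC -ltr_pdivrMr //.
have hQQ : Q%:R < Q.+1%:R :> R by rewrite ltr_nat.
apply: (lt_trans _ hQQ); apply: le_lt_trans hQ; by rewrite lerDr.
Qed.

End Main.



Lemma int_unit_pos (m : int) : m \is a GRing.unit -> 0 <= m -> m = 1.
Proof. rewrite unfold_in /= => /orP[/eqP -> // | /eqP ->] //. Qed.

Lemma case_d0 (R : realType) (W : set 'cV[int]_1)
  (x : 'cV[R]_1) (M : 'M[int]_1) :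
  M \in unitmx -> (forall i j, 0 <= M i j) ->
  Tx_nonempty_interior x W ->
  Tx_nonempty_interior (map_mx (fun k : int => k%:~R) M *m x)
    [set M *m z | z in W].
Proof.
move=> Mu Mp [V [HV [Vne VW]]].
have M1 : M = 1%:M.
  rewrite [M]mx11_scalar; congr (_%:M); apply: int_unit_pos; last exact: Mp.
  by rewrite -det_mx11 -unitmxE.
rewrite M1 map_mx1 mul1mx; exists V; split => //; split => // z Vz.
by exists z; [exact: VW | rewrite mul1mx].
Qed.



Lemma hsumD_int n (a b : 'cV[int]_n) : hsum (a + b) = hsum a + hsum b.
Proof. by rewrite /hsum -big_split; apply: eq_bigr => i _; rewrite mxE. Qed.
Lemma hsumB_int n (a b : 'cV[int]_n) : hsum (a - b) = hsum a - hsum b.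
Proof.
rewrite /hsum -sumrB; apply: eq_bigr => i _; by rewrite !mxE.
Qed.

Lemma aux_int (a b : int) : a < 0 -> 0 <= b -> a - b <= -1.
Proof. lia. Qed.

Lemma case_main (R : realType) (d : nat) (W : set 'cV[int]_(d.+2))
  (x : 'cV[R]_(d.+2)) (M : 'M[int]_(d.+2)) :
  W `<=` @halfH d.+2 ->
  positive_vec x -> totally_irrational x ->
  M \in unitmx -> (forall i j, 0 <= M i j) ->
  Tx_nonempty_interior x W ->
  Tx_nonempty_interior (map_mx (fun k : int => k%:~R) M *m x)
    [set M *m z | z in W].
Proof.
move=> HW xpos xirr Mu Mp [V [HV [[z0 Vz0] VW]]].
case: HV => U [hU VE]; case: hU => O0 [Oop UE].
subst U V.
set Mr := map_mx (fun k : int => k%:~R : R) M.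
set v := vdir x.
have hx0 : 0 < hsum x by apply: hsum_gt0.
have hv : hsum v = 1 by apply: hsum_vdir; rewrite lt0r_neq0.
have vpos i : 0 < v i 0 by rewrite /v /vdir mxE mulr_gt0 // invr_gt0.
have Mrp i j : 0 <= Mr i j by rewrite mxE ler0z.
have MrU : Mr \in unitmx.
  by rewrite unitmxE det_map_mx; apply: rmorph_unit; rewrite -unitmxE.
have xdec : x = hsum x *: v by rewrite /v /vdir scalerA mulfV ?scale1r // lt0r_neq0.
set c := hsum (Mr *m v).
have c0 : 0 < c.
  apply: hsum_gt0_nz.
    by move=> i; rewrite mxE sumr_ge0 // => j _; rewrite mulr_ge0 // ltW.
  apply/negP => /eqP h; have := vpos 0; rewrite -(mulKmx MrU v) h mulmx0 mxE ltxx.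
  done.
set y := Mr *m x.
have hy : hsum y = hsum x * c by rewrite /y {1}xdec -scalemxAr hsumZ.
have hy0 : 0 < hsum y by rewrite hy mulr_gt0.
have hyv : hsum (vdir y) = 1 by apply: hsum_vdir; rewrite lt0r_neq0.
have K1 z : hsum (zR R (M *m z)) = hsum (Mr *m pix x (zR R z)) + (hsum z)%:~R * c.
  by rewrite zR_mul {1}(@pix_dec R _ x (zR R z)) mulmxDr hsumD -scalemxAr hsumZ hsum_zR.
set Lm := (1%:M - v *m (const_mx 1 : 'M[R]_(1, d.+2))) *m invmx Mr.
have K2 z : pix x (zR R z) = Lm *m pix y (zR R (M *m z)).
  have e : invmx Mr *m pix y (zR R (M *m z)) =
      zR R z - (hsum (zR R (M *m z)) * (hsum y)^-1) *: x.
    rewrite /pix {1}/vdir mulmxBr zR_mul mulKmx // -!scalemxAr /y mulKmx //.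
    by rewrite !scalerA.
  have pxx : pix x x = 0.
    by rewrite /pix /vdir scalerA mulfV ?scale1r ?subrr // lt0r_neq0.
  by rewrite -mulmxA -pix_mx e pixB pixZ pxx scaler0 subr0.
move: Vz0 => [[Op0 _] hz0].
set p0 := pix x (zR R z0).
set G := O0 `&` [set p | hsum (Mr *m p0) - 1 < hsum (Mr *m p)].
have Gop : open G by apply: openI => //; apply: open_hsum_gt.
have : nbhs p0 G.
  by apply: open_nbhs_nbhs; split => //; split => //=; rewrite ltrBlDr ltrDl.
move/nbhs_ballP => [dl dl0 Hb].
set J := Num.bound `|(1 - hsum (Mr *m p0)) / c|.
have hJ : (1 - hsum (Mr *m p0)) / c < J%:R.
  exact: (le_lt_trans (ler_norm _) (archi_boundP (normr_ge0 _))).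
have [u [hu pu]] := @dir2 R _ x dl J hv dl0.
set z1 := z0 + u.
set p1 := pix x (zR R z1).
have p1E : p1 = p0 + pix x (zR R u) by rewrite /p1 /z1 zRD pixD.
have Gp1 : G p1.
  by apply: Hb; rewrite -ball_normE /= p1E opprD addrA subrr add0r normrN.
have hz1J : (J%:Z <= hsum z1).
  by rewrite /z1 hsumD_int; apply: le_trans hu _; rewrite lerDr.
have hz1 : 0 <= hsum z1 by apply: le_trans hz1J.
have Op1 : O0 p1 by case: Gp1.
have hMz1 : 0 <= hsum (M *m z1).
  rewrite -(ler0z R) -hsum_zR K1 -/p1.
  case: Gp1 => _ /= hG.
  have h1 : J%:R * c <= (hsum z1)%:~R * c.
    by apply: ler_wpM2r; [exact: ltW | rewrite -(ler_int R) in hz1J].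
  have h2 : 1 - hsum (Mr *m p0) < J%:R * c by rewrite -ltr_pdivrMr.
  lra.
set k1 := hsum z1.
set B := hsum (Mr *m p1) + 1.
set N := Num.bound `|(B / c + k1%:~R) * `|v| + 1|.
have hN : (B / c + k1%:~R) * `|v| + 1 < N%:R.
  exact: (le_lt_trans (ler_norm _) (archi_boundP (normr_ge0 _))).
set i0 : 'I_(d.+2) := ord0.
set i1 : 'I_(d.+2) := ord_max.
have Hirr (a b : int) : a%:~R * v i1 0 - b%:~R * v i0 0 = 0 -> a = 0 /\ b = 0.
  move=> hab.
  pose q (i : 'I_(d.+2)) : rat :=
    if i == i0 then (- b)%:~R else if i == i1 then a%:~R else 0.
  have hs : \sum_i ratr (q i) * vdir x i 0 = 0.
    rewrite (bigD1 i0) //= (bigD1 i1) //= big1; last first.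
      by move=> i /andP[h1 h2]; rewrite /q (negbTE h1) (negbTE h2) rmorph0 mul0r.
    rewrite /q eqxx /= !ratr_int addr0 -/v.
    by apply: (eq_trans _ hab); rewrite eqxx ratr_int intrN; ring.
  have hq := xirr q hs.
  have := hq i0; rewrite /q eqxx => /eqP; rewrite (intr_eq0 rat (- b)) oppr_eq0 => /eqP hbb.
  have := hq i1; rewrite /q /= eqxx => /eqP; rewrite (intr_eq0 rat a) => /eqP haa.
  by split.
have [rb rb0 Hrb] := @sep R (v i0 0) (v i1 0) N Hirr.
set r := Num.min 1 (Num.min (v i0 0) (rb / (v i0 0 + v i1 0))).
have v01 : 0 < v i0 0 + v i1 0 by rewrite addr_gt0.
have r0 : 0 < r by rewrite !lt_min ltr01 vpos divr_gt0.
have r1 : r <= 1 by rewrite ge_min lexx.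
have r2 : r <= v i0 0 by rewrite ge_min [X in _ || X]ge_min lexx orbT.
have r3 : r <= rb / (v i0 0 + v i1 0) by rewrite ge_min [X in _ || X]ge_min lexx !orbT.
set O2 := O0 `&` ball p1 r `&` [set p | hsum (Mr *m p) < B].
set O1 := [set q | O2 (Lm *m q)].
exists ([set w | (O1 `&` @hypP R d.+2) (pix y (zR R w))] `&` @halfH d.+2).
split; [|split].
- exists (O1 `&` @hypP R d.+2); split => //; exists O1; split => //.
  have O2op : open O2.
    by apply: openI; [apply: openI => //; exact: ball_open | exact: open_hsum_lt].
  exact: ((continuousP _).1 (@mulmx_cont R _ _ 1 Lm) _ O2op).
- exists (M *m z1); split; last exact: hMz1.
  split; last exact: hsum_pix hyv.
  rewrite /O1 /= -K2 -/p1; split; [split => // | ].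
    exact: ballxx.
  by rewrite /= /B ltrDl.
- move=> w [[Hw1 _] hw].
  set z := invmx M *m w.
  have wz : w = M *m z by rewrite /z mulKVmx.
  rewrite wz in Hw1 hw *; exists z => //; apply: VW.
  move: Hw1; rewrite /O1 /= -K2; set p := pix x (zR R z) => -[[Hop bp] pB].
  split; first by split => //; exact: hsum_pix hv.
  rewrite /halfH /= leNgt; apply/negP => hk.
set k := hsum z in hk.
have hwR : 0 <= hsum (Mr *m p) + k%:~R * c.
  by move: hw; rewrite /halfH /= -(ler0z R) -hsum_zR K1.
set uu := z - z1.
set m := hsum uu.
have mE : m = k - k1 by rewrite /m /uu hsumB_int.
have hm1 : m <= -1 by rewrite mE; apply: aux_int.
have eE i : (uu i 0)%:~R - m%:~R * v i 0 = p i 0 - p1 i 0.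
  rewrite /p /p1 /pix /v !hsum_zR mE !mxE !intrB !intrD; ring.
have eb i : `|p i 0 - p1 i 0| < r.
  move: bp; rewrite -ball_normE /= distrC => bp.
  apply: le_lt_trans bp; have := @entry_le_norm R _ _ (p - p1) i 0; by rewrite !mxE.
have hkB : - k%:~R < B / c.
  rewrite ltr_pdivlMr // mulNr; move: pB hwR => /= pB hwR; lra.
have hmB : - m%:~R < B / c + k1%:~R by rewrite mE intrB; lra.
have vle i : v i 0 <= `|v|.
  by have := @entry_le_norm R _ _ v i 0; rewrite ger0_norm // ltW.
have mlt : (m%:~R : R) <= -1 by rewrite -(ler_int R) in hm1.
have ub i : (absz (uu i 0%R) <= N)%N.
  apply: ltnW; rewrite -(ltr_nat R) natr_absz intr_norm.
  have h1 : `|(uu i 0)%:~R : R| <= `|m%:~R * v i 0| + `|p i 0 - p1 i 0|.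
    rewrite -eE; apply: le_trans (ler_normD _ _); by rewrite addrC subrK.
  apply: le_lt_trans h1 _; apply: le_lt_trans hN.
  rewrite normrM ler0_norm ?(ler0z R) //; last by lra.
  apply: lerD; last by apply: ltW (lt_le_trans (eb i) r1).
  rewrite ger0_norm ?ltW //.
  apply: (@lt_le_trans _ _ ((B / c + k1%:~R) * v i 0)).
    by rewrite ltr_pM2r.
  by apply: ler_wpM2l => //; lra.
have h01 : v i0 0 + v i1 0 > 0 by [].
case Hu: ((uu i0 0 != 0) || (uu i1 0 != 0)).
  have := Hrb _ _ (ub i0) (ub i1) Hu.
  have -> : (uu i0 0)%:~R * v i1 0 - (uu i1 0)%:~R * v i0 0 =
      (p i0 0 - p1 i0 0) * v i1 0 - (p i1 0 - p1 i1 0) * v i0 0.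
    rewrite -!eE; ring.
  have h2 : `|(p i0 0 - p1 i0 0) * v i1 0 - (p i1 0 - p1 i1 0) * v i0 0|
      < r * (v i0 0 + v i1 0).
    apply: le_lt_trans (ler_normB _ _) _; rewrite !normrM !(ger0_norm (ltW (vpos _))).
    by rewrite mulrDr addrC; apply: ltrD; rewrite ltr_pM2r.
  have h3 : r * (v i0 0 + v i1 0) <= rb by rewrite -ler_pdivlMr.
  move=> h4; have := lt_le_trans (le_lt_trans h4 h2) h3; by rewrite ltxx.
move/negbT: Hu; rewrite negb_or !negbK => /andP[/eqP u0 _].
have := eb i0; rewrite -eE u0 sub0r normrN normrM ler0_norm ?(ler0z R) //; last by lra.
have : v i0 0 <= - m%:~R * v i0 0.
  by rewrite -[X in X <= _]mul1r; apply: ler_wpM2r; [exact: ltW | lra].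
move=> h5; rewrite ger0_norm ?ltW // => h6; have := lt_le_trans (le_lt_trans h5 h6) r2; by rewrite ltxx.
Qed.


Theorem lemma3p17 (R : realType) (d : nat) (W : set 'cV[int]_(d.+1))
  (x : 'cV[R]_(d.+1)) (M : 'M[int]_(d.+1)) :
  W `<=` @halfH d.+1 ->
  positive_vec x -> totally_irrational x ->
  M \in unitmx -> (forall i j, 0 <= M i j) ->
  Tx_nonempty_interior x W ->
  Tx_nonempty_interior (map_mx (fun k : int => k%:~R) M *m x)
    [set M *m z | z in W].
Proof.
case: d W x M => [|d] W x M HW xpos xirr Mu Mp HT.
  exact: case_d0.
exact: case_main.
Qed.
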